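(* Let $k$ be a positive integer, $G>0$, and let $g_1,\dots,g_k$ be strongly additive functions with $0\le g_j(p)\le G$ for all $j$ and all $p\in\mathcal P$, and assume $\mathfrak K=\max_{1\le i\le k}\sigma^{\mathcal P}(g_i)^2\ge1$. Then $$S:=\sum_{\substack{p_1,\dots,p_k\in\mathcal P\\ p_1\cdots p_k\text{ squarefull}\\ \#\{p_1,\dots,p_k\}<k/2}}H(p_1\cdots p_k)g_1(p_1)\cdots g_k(p_k)$$ satisfies $S\ll\mathfrak K^{k/2-1}$ if $k$ is even and $S\ll\mathfrak K^{(k-1)/2}$ if $k$ is odd, with implied constants depending only on $k$ and $G$.
   Context: $\mathcal P$ is a finite set of primes and $h$ is multiplicative with $0\le h(d)\le d$. Strongly additive: $g(n)=\sum_{p\mid n}g(p)$. $\sigma^{\mathcal P}(g)^2=\sum_{p\in\mathcal P}g(p)^2\frac{h(p)}p\big(1-\frac{h(p)}p\big)$. $H$ is multiplicative with $H(p^\alpha)=\frac{h(p)}p\big(1-\frac{h(p)}p\big)^\alpha+\big(-\frac{h(p)}p\big)^\alpha\big(1-\frac{h(p)}p\big)$. The sum is over ordered $k$-tuples; squarefull means every prime divisor appears at least squared. *)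

(* Defs.v *)
From HB Require Import structures.
From mathcomp Require Import all_boot all_order all_algebra.
Set Implicit Arguments. Unset Strict Implicit. Unset Printing Implicit Defensive.
Import Order.TTheory GRing.Theory Num.Theory.
Local Open Scope ring_scope.

Section Defs.
Variable R : realFieldType.

Definition multiplicative_fn (h : nat -> R) : Prop :=
  h 1%N = 1 /\ forall m n : nat, coprime m n -> h (m * n)%N = h m * h n.

Definition strongly_additive (g : nat -> R) : Prop :=
  forall n : nat, (0 < n)%N -> g n = \sum_(p <- primes n) g p.

Definition Hpp (h : nat -> R) (p a : nat) : R :=
  h p / p%:R * (1 - h p / p%:R) ^+ a + (- (h p / p%:R)) ^+ a * (1 - h p / p%:R).

Definition Hfun (h : nat -> R) (n : nat) : R :=
  \prod_(p <- primes n) Hpp h p (logn p n).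

Definition sigma2 (P : seq nat) (h : nat -> R) (g : nat -> R) : R :=
  \sum_(p <- P) g p ^+ 2 * (h p / p%:R) * (1 - h p / p%:R).

(* frak K = max_i sigma^P(g_i)^2 (all sigma2 are >= 0 under the hypotheses) *)
Definition Kmax (k : nat) (P : seq nat) (h : nat -> R) (g : 'I_k -> nat -> R) : R :=
  \big[Num.max/0]_(i < k) sigma2 P h (g i).

End Defs.
Local Close Scope ring_scope.

Definition squarefull (n : nat) : bool := all (fun p => (p ^ 2 %| n)%N) (primes n).

(* the sum S over ordered k-tuples (p_1,...,p_k) of elements of P, P a
   duplicate-free list; a tuple is encoded by indices t : 'I_k -> 'I_(size P) *)
Local Open Scope ring_scope.
Definition Ssum (R : realFieldType) (k : nat) (P : seq nat) (h : nat -> R)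
    (g : 'I_k -> nat -> R) : R :=
  \sum_(t : {ffun 'I_k -> 'I_(size P)} |
          squarefull (\prod_(i < k) nth 0%N P (t i))%N &&
          (2 * size (undup [seq nth 0%N P (t i) | i <- enum 'I_k]) < k)%N)
     Hfun h (\prod_(i < k) nth 0%N P (t i))%N * \prod_(i < k) g i (nth 0%N P (t i)).

(* Main.v *)
Set Warnings "-notation-overridden,-ambiguous-paths".
Require Import Defs.
From HB Require Import structures.
From mathcomp Require Import all_boot all_order all_algebra.
From mathcomp Require Import ring lra zify.
Import Order.TTheory GRing.Theory Num.Theory.
Set Implicit Arguments. Unset Strict Implicit. Unset Printing Implicit Defensive.
Local Open Scope ring_scope.

Definition wfn (R : realFieldType) (h : nat -> R) (p : nat) : R :=
  h p / p%:R * (1 - h p / p%:R).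

Lemma wfn_ge0 (R : realFieldType) (h : nat -> R) p :
  (0 < p)%N -> 0 <= h p <= p%:R -> 0 <= wfn h p.
Proof.
move=> p0 /andP[h0 hp]; rewrite /wfn.
have q0 : 0 <= h p / p%:R by rewrite divr_ge0.
have q1 : h p / p%:R <= 1 by rewrite ler_pdivrMr ?ltr0n // mul1r.
by rewrite mulr_ge0 // subr_ge0.
Qed.

Lemma Hpp_bound (R : realFieldType) (h : nat -> R) p a :
  (0 < p)%N -> 0 <= h p <= p%:R -> (2 <= a)%N -> `|Hpp h p a| <= wfn h p.
Proof.
move=> p0 /andP[h0 hp] a2; rewrite /Hpp /wfn.
set q := h p / p%:R.
have q0 : 0 <= q by rewrite divr_ge0.
have q1 : q <= 1 by rewrite ler_pdivrMr ?ltr0n // mul1r.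
have q1' : 0 <= 1 - q by rewrite subr_ge0.
case: a a2 => [|[|b]] // _.
have e1 : (1 - q) ^+ b.+2 <= (1 - q) ^+ 2.
  rewrite -addn2 exprD; apply: ler_piMl; [exact: exprn_ge0 q1'|apply: exprn_ile1 => //; lra].
have e2 : `|(- q) ^+ b.+2| <= q ^+ 2.
  rewrite normrX normrN ger0_norm // -addn2 exprD.
  apply: ler_piMl; [exact: exprn_ge0 q0|exact: exprn_ile1].
apply: le_trans (ler_normD _ _) _.
rewrite normrM (ger0_norm q0) (ger0_norm (exprn_ge0 _ q1')) normrM (ger0_norm q1').
apply: le_trans (_ : q * (1 - q) ^+ 2 + q ^+ 2 * (1 - q) <= _).
  apply: lerD; first exact: ler_wpM2l.
  exact: ler_wpM2r.
by rewrite le_eqVlt; apply/orP; left; apply/eqP; ring.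
Qed.

Definition pat (m n : nat) (t : {ffun 'I_m -> 'I_n}) : {ffun 'I_m -> 'I_m} :=
  [ffun i => nth i (enum 'I_m) (index (t i) [seq t j | j <- enum 'I_m])].

Lemma pat_t m n (t : {ffun 'I_m -> 'I_n}) i : t (pat t i) = t i.
Proof.
rewrite ffunE.
have Hin : t i \in [seq t j | j <- enum 'I_m] by rewrite map_f ?mem_enum.
have Hlt := Hin; rewrite -index_mem size_map in Hlt.
by rewrite -(nth_map i (t i)) // nth_index.
Qed.

Lemma pat_eq m n (t : {ffun 'I_m -> 'I_n}) i j : t i = t j -> pat t i = pat t j.
Proof.
move=> E; rewrite !ffunE E; apply: set_nth_default.
have Hin : t j \in [seq t j | j <- enum 'I_m] by rewrite map_f ?mem_enum.
by rewrite -index_mem size_map in Hin.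
Qed.

Lemma pat_idem m n (t : {ffun 'I_m -> 'I_n}) i : pat t (pat t i) = pat t i.
Proof. by apply: pat_eq; rewrite pat_t. Qed.

Lemma half_eq k : (if odd k then k.-1./2 else (k./2).-1) = k.-1./2.
Proof. case: (odd k) (odd_double_half k) => /= E; lia. Qed.
Lemma term_bound (R : realFieldType) k (P : seq nat) (h : nat -> R) (g : 'I_k -> nat -> R)
    (t : {ffun 'I_k -> 'I_(size P)}) :
  uniq P -> all prime P -> (forall d : nat, 0 <= h d <= d%:R) ->
  (forall j p, p \in P -> 0 <= g j p) ->
  squarefull (\prod_(i < k) nth 0%N P (t i))%N ->
  `|Hfun h (\prod_(i < k) nth 0%N P (t i))%N * \prod_(i < k) g i (nth 0%N P (t i))|
   <= \prod_(j | pat t j == j)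
        (wfn h (nth 0%N P (t j)) * \prod_(i | pat t i == j) g i (nth 0%N P (t j))).
Proof.
move=> uP aP hb gb sq.
set N := (\prod_(i < k) _)%N.
have xP i : nth 0%N P (t i) \in P := mem_nth 0%N (ltn_ord (t i)).
have xpr i : prime (nth 0%N P (t i)) := allP aP _ (xP i).
have N0 : (0 < N)%N by apply: prodn_gt0 => i; exact: prime_gt0.
have gge : 0 <= \prod_(i < k) g i (nth 0%N P (t i)).
  by apply: prodr_ge0 => i _; apply: gb.
rewrite normrM (ger0_norm gge).
have H1 : `|Hfun h N| <= \prod_(p <- primes N) wfn h p.
  rewrite /Hfun normr_prod !big_seq; apply: ler_prod => p Hp.
  have pp : prime p by move: Hp; rewrite mem_primes => /and3P[].
  rewrite normr_ge0 /=; apply: Hpp_bound; first exact: prime_gt0.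
    exact: hb.
  by rewrite -pfactor_dvdn //; apply: (allP sq).
apply: le_trans (ler_wpM2r gge H1) _.
have Hperm : perm_eq (primes N)
   [seq nth 0%N P (t j) | j <- [seq j <- index_enum 'I_k | pat t j == j]].
  apply: uniq_perm; first exact: primes_uniq.
    rewrite map_inj_in_uniq ?filter_uniq ?index_enum_uniq //.
    move=> j j'; rewrite !mem_filter => /andP[/eqP Hj _] /andP[/eqP Hj' _] E.
    have E' : t j = t j'.
      by apply/val_inj/eqP; rewrite -(nth_uniq 0%N (s:=P)) ?ltn_ord //; apply/eqP.
    by rewrite -Hj -Hj'; apply: pat_eq.
  move=> p; apply/idP/idP.
    rewrite mem_primes => /and3P[pp _].
    rewrite /N Euclid_dvd_prod // big_has => /hasP[i _ Hi].
    rewrite dvdn_prime2 // in Hi; rewrite (eqP Hi).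
    apply/mapP; exists (pat t i); last by rewrite pat_t.
    by rewrite mem_filter pat_idem eqxx mem_index_enum.
  case/mapP => j; rewrite mem_filter => /andP[Hj _] ->.
  rewrite mem_primes xpr N0 /= /N (bigD1 j) //=; exact: dvdn_mulr.
rewrite (perm_big _ Hperm) big_map big_filter.
rewrite [X in _ * X <= _](partition_big (pat t) (fun j => pat t j == j)) /=; last first.
  by move=> i _; rewrite pat_idem.
rewrite -big_split /= le_eqVlt; apply/orP; left; apply/eqP.
apply: eq_bigr => j /eqP Hj; congr (_ * _); apply: eq_bigr => i /eqP <-.
by rewrite pat_t.
Qed.

Lemma sum_sub_le (R : realFieldType) (I : finType) (A B : pred I) (F : I -> R) :
  (forall i, 0 <= F i) -> (forall i, A i -> B i) ->
  \sum_(i | A i) F i <= \sum_(i | B i) F i.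
Proof.
move=> F0 AB; rewrite [X in X <= _]big_mkcond [X in _ <= X]big_mkcond.
apply: ler_sum => i _; case Ai: (A i); first by rewrite (AB i Ai).
by case: (B i).
Qed.

Lemma sum_pat_bound (R : realFieldType) m n (r : {ffun 'I_m -> 'I_m})
    (f : 'I_m -> 'I_n -> R) :
  (forall j y, 0 <= f j y) ->
  \sum_(t : {ffun 'I_m -> 'I_n} | pat t == r) \prod_(j | r j == j) f j (t j)
  <= \prod_(j | r j == j) \sum_(y : 'I_n) f j y.
Proof.
move=> f0.
have RHS0 : 0 <= \prod_(j | r j == j) \sum_(y : 'I_n) f j y.
  by apply: prodr_ge0 => j _; apply: sumr_ge0 => y _.
case: (pickP (fun t : {ffun 'I_m -> 'I_n} => pat t == r)) => [t0 Ht0|none];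
  last by rewrite (eq_bigl _ _ none) big_pred0_eq.
pose Ψ := fun s : {ffun 'I_m -> 'I_n} =>
  \prod_i (if r i == i then f i (s i) else (s i == t0 i)%:R).
pose ψ := fun t : {ffun 'I_m -> 'I_n} => ([ffun i => if r i == i then t i else t0 i] : {ffun 'I_m -> 'I_n}).
have E1 (t : {ffun 'I_m -> 'I_n}) : \prod_(j | r j == j) f j (t j) = Ψ (ψ t).
  rewrite /Ψ big_mkcond /=; apply: eq_bigr => i _; rewrite ffunE.
  by case: ifP => //; rewrite eqxx.
rewrite (eq_bigr (fun t => Ψ (ψ t))); last by move=> t _; exact: E1.
have inj : {in [pred t | pat t == r] &, injective ψ}.
  move=> t1 t2; rewrite !inE => /eqP H1 /eqP H2 E.
  apply/ffunP => i; have := congr1 (fun s : {ffun 'I_m -> 'I_n} => s (r i)) E.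
  have Hri : r (r i) = r i by rewrite -H1 pat_idem.
  rewrite !ffunE Hri eqxx => E'.
  by rewrite -(pat_t t1 i) -(pat_t t2 i) H1 H2.
rewrite -(big_imset _ inj) /=.
apply: le_trans (_ : \sum_s Ψ s <= _).
  apply: sum_sub_le => //= s; rewrite /Ψ; apply: prodr_ge0 => i _.
  by case: ifP => // _; rewrite ler0n.
rewrite /Ψ -(bigA_distr_bigA (fun i y => if r i == i then f i y else (y == t0 i)%:R)).
rewrite [X in _ <= X]big_mkcond le_eqVlt; apply/orP; left; apply/eqP.
apply: eq_bigr => i _; case: ifP => // _.
rewrite (bigD1 (t0 i)) //= eqxx big1 ?addr0 // => y /negbTE ->.
by [].
Qed.

Lemma sigma_nth (R : realFieldType) (P : seq nat) (F : nat -> R) :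
  \sum_(y < size P) F (nth 0%N P y) = \sum_(p <- P) F p.
Proof. by rewrite (big_nth 0%N) big_mkord. Qed.

Lemma fiber_bound (R : realFieldType) k (P : seq nat) (h : nat -> R)
    (g : 'I_k -> nat -> R) (G : R) (r : {ffun 'I_k -> 'I_k}) (j i1 : 'I_k) :
  (forall d : nat, 0 <= h d <= d%:R) -> all prime P ->
  (forall j p, p \in P -> 0 <= g j p <= G) ->
  r j = j -> i1 != j -> r i1 = j ->
  \sum_(y < size P) (wfn h (nth 0%N P y) * \prod_(i | r i == j) g i (nth 0%N P y))
  <= Num.max 1 G ^+ k * Kmax P h g.
Proof.
move=> hb aP gb Hj Hi1 Hri1.
set Gm := Num.max 1 G.
have Gm1 : 1 <= Gm by rewrite le_max lexx.
have GGm : G <= Gm by rewrite le_max lexx orbT.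
have Gmk : 0 <= Gm ^+ k by apply: exprn_ge0; apply: le_trans Gm1.
pose sg (i : 'I_k) (p : nat) := g i p ^+ 2 * (h p / p%:R) * (1 - h p / p%:R).
apply: le_trans (_ : \sum_(y < size P) Gm ^+ k *
    ((sg j (nth 0%N P y) + sg i1 (nth 0%N P y)) / 2) <= _).
  apply: ler_sum => y _.
  set p := nth 0%N P y.
  have Hp : p \in P by apply: mem_nth.
  have pp : prime p by apply: (allP aP).
  have w0 : 0 <= wfn h p by apply: wfn_ge0; [exact: prime_gt0|exact: hb].
  rewrite (bigD1 j) ?Hj ?eqxx //= (bigD1 i1) /=; last by rewrite Hri1 eqxx Hi1.
  set c := \prod_(i | _) _.
  have /andP[a0 aG] := gb j p Hp.
  have /andP[b0 bG] := gb i1 p Hp.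
  have c0 : 0 <= c by apply: prodr_ge0 => i _; case/andP: (gb i p Hp).
  have cG : c <= Gm ^+ k.
    apply: le_trans (_ : \prod_(i | ((r i == j) && (i != j)) && (i != i1)) Gm <= _).
      apply: ler_prod => i _; case/andP: (gb i p Hp) => -> /= gi.
      exact: le_trans GGm.
    rewrite prodr_const; apply: ler_weXn2l => //.
    by rewrite -[X in (_ <= X)%N](card_ord k) max_card.
  set a := g j p; set b := g i1 p.
  have ab : a * b <= (a ^+ 2 + b ^+ 2) / 2.
    have := sqr_ge0 (a - b).
    have -> : (a - b) ^+ 2 = a ^+ 2 + b ^+ 2 - 2 * (a * b) by ring.
    move=> H; lra.
  have E : Gm ^+ k * ((sg j p + sg i1 p) / 2) = (wfn h p * ((a ^+ 2 + b ^+ 2) / 2)) * Gm ^+ k.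
    by rewrite /sg /wfn /a /b; ring.
  rewrite E.
  have -> : wfn h p * (a * (b * c)) = (wfn h p * (a * b)) * c by ring.
  apply: le_trans (_ : wfn h p * (a * b) * Gm ^+ k <= _).
    apply: ler_wpM2l => //; apply: mulr_ge0 => //; exact: mulr_ge0.
  apply: ler_wpM2r => //; exact: ler_wpM2l.
rewrite -mulr_sumr; apply: ler_wpM2l => //.
rewrite -mulr_suml big_split /= (sigma_nth P (sg j)) (sigma_nth P (sg i1)).
have Kj : sigma2 P h (g j) <= Kmax P h g by apply: (le_bigmax 0 (fun i => sigma2 P h (g i)) j).
have Ki : sigma2 P h (g i1) <= Kmax P h g by apply: (le_bigmax 0 (fun i => sigma2 P h (g i)) i1).
rewrite /sigma2 in Kj Ki.
lra.
Qed.

Lemma fiber_exists k (P : seq nat) (t : {ffun 'I_k -> 'I_(size P)}) j :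
  uniq P -> all prime P -> squarefull (\prod_(i < k) nth 0%N P (t i))%N ->
  pat t j = j -> exists2 i1, i1 != j & pat t i1 = j.
Proof.
move=> uP aP; set N := (\prod_(i < k) _)%N => sq Hj.
have xP i : nth 0%N P (t i) \in P := mem_nth 0%N (ltn_ord (t i)).
have xpr i : prime (nth 0%N P (t i)) := allP aP _ (xP i).
have N0 : (0 < N)%N by apply: prodn_gt0 => i; exact: prime_gt0.
case: (boolP [exists i, (i != j) && (pat t i == j)]).
  by case/existsP => i /andP[H1 /eqP H2]; exists i.
move/existsPn => no; exfalso.
set p := nth 0%N P (t j).
have pp : prime p := xpr j.
have Hp : p \in primes N by rewrite mem_primes xpr N0 /N (bigD1 j) //= dvdn_mulr.
have := allP sq p Hp; rewrite /N (bigD1 j) //= -/p expnS expn1 dvdn_pmul2l ?prime_gt0 //.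
apply/negP; apply: (big_ind (fun n => ~~ (p %| n)%N)).
- by rewrite dvdn1; apply/eqP => E; move: (xpr j); rewrite -/p E.
- by move=> a b Ha Hb; rewrite Euclid_dvdM ?xpr // negb_or Ha Hb.
move=> i Hij; rewrite (dvdn_prime2 pp (xpr i)); apply/negP => /eqP Hdiv.
have E : t i = t j.
  apply/val_inj/eqP; rewrite -(nth_uniq 0%N (s:=P)) ?ltn_ord // eq_sym.
  by apply/eqP.
have := no i; rewrite Hij /=.
by rewrite (pat_eq E) Hj eqxx.
Qed.

Lemma cardJ_bound k (P : seq nat) (t : {ffun 'I_k -> 'I_(size P)}) :
  uniq P ->
  (#|[pred j | pat t j == j]| <= size (undup [seq nth 0%N P (t i) | i <- enum 'I_k]))%N.
Proof.
move=> uP; rewrite cardE -(size_map (fun j => nth 0%N P (t j))).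
apply: uniq_leq_size.
  rewrite map_inj_in_uniq ?enum_uniq //.
  move=> j j'; rewrite !mem_enum !inE => /eqP Hj /eqP Hj' E.
  have E' : t j = t j'.
    by apply/val_inj/eqP; rewrite -(nth_uniq 0%N (s:=P)) ?ltn_ord //; apply/eqP.
  by rewrite -Hj -Hj'; apply: pat_eq.
by move=> p /mapP[j _ ->]; rewrite mem_undup; apply/mapP; exists j; rewrite ?mem_enum.
Qed.

Theorem mainTheorem11 (R : realFieldType) (k : nat) (G : R) :
  (0 < k)%N -> 0 < G ->
  exists C : R,
    forall (P : seq nat) (h : nat -> R) (g : 'I_k -> nat -> R),
      uniq P -> all prime P ->
      multiplicative_fn h -> (forall d : nat, 0 <= h d <= d%:R) ->
      (forall j, strongly_additive (g j)) ->
      (forall j p, p \in P -> 0 <= g j p <= G) ->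
      1 <= Kmax P h g ->
      `|Ssum P h g| <=
        C * Kmax P h g ^+ (if odd k then k.-1./2 else (k./2).-1).
Proof.
move=> k0 G0.
exists (#|{ffun 'I_k -> 'I_k}|%:R * Num.max 1 G ^+ (k * k)).
move=> P h g uP aP _ hb _ gb K1.
rewrite half_eq.
set K := Kmax P h g; set M := k.-1./2; set Gm := Num.max 1 G.
have Gm1 : 1 <= Gm by rewrite le_max lexx.
have Gm0 : 0 <= Gm by apply: le_trans Gm1.
have K0 : 0 <= K by apply: le_trans K1.
have B0 : 0 <= Gm ^+ (k * k) * K ^+ M by apply: mulr_ge0; apply: exprn_ge0.
have gb0 j p : p \in P -> 0 <= g j p by move=> Hp; case/andP: (gb j p Hp).
rewrite /Ssum; apply: le_trans (ler_norm_sum _ _ _) _.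
rewrite (partition_big (@pat k (size P)) xpredT) //=.
apply: le_trans (_ : \sum_(r : {ffun 'I_k -> 'I_k}) Gm ^+ (k * k) * K ^+ M <= _);
  last first.
  by rewrite sumr_const -mulrA mulr_natl cardT -cardE.
apply: ler_sum => r _.
set A := fun t : {ffun 'I_k -> 'I_(size P)} =>
  squarefull (\prod_(i < k) nth 0%N P (t i))%N &&
  (2 * size (undup [seq nth 0%N P (t i) | i <- enum 'I_k]) < k)%N.
case: (pickP (fun t => A t && (pat t == r))); last first.
  by move=> none; rewrite (eq_bigl _ _ none) big_pred0_eq.
move=> t0 /andP[/andP[sq0 cnt0] /eqP Hr0].
pose f (j : 'I_k) (y : 'I_(size P)) :=
  wfn h (nth 0%N P y) * \prod_(i | r i == j) g i (nth 0%N P y).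
have f0 j y : 0 <= f j y.
  have Hp : nth 0%N P y \in P by apply: mem_nth.
  apply: mulr_ge0; first by apply: wfn_ge0; [exact: prime_gt0 (allP aP _ Hp)|exact: hb].
  by apply: prodr_ge0 => i _; apply: gb0.
apply: le_trans (_ : \sum_(t | pat t == r) \prod_(j | r j == j) f j (t j) <= _).
  apply: le_trans (_ : \sum_(t | A t && (pat t == r)) \prod_(j | r j == j) f j (t j) <= _).
    apply: ler_sum => t /andP[/andP[sq _] /eqP Hr].
    rewrite /f -Hr; exact: term_bound.
  apply: sum_sub_le; first by move=> t; apply: prodr_ge0 => j _.
  by move=> t /andP[].
apply: le_trans (@sum_pat_bound R k (size P) r f f0) _.
apply: le_trans (_ : \prod_(j | r j == j) (Gm ^+ k * K) <= _).
  apply: ler_prod => j /eqP Hj; rewrite sumr_ge0 //=.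
  have [i1 Hi1 Hri1] : exists2 i1, i1 != j & pat t0 i1 = j.
    by apply: fiber_exists => //; rewrite Hr0.
  rewrite Hr0 in Hri1; rewrite /f.
  exact: (fiber_bound hb aP gb Hj Hi1 Hri1).
rewrite prodr_const exprMn -exprM.
have cJ := cardJ_bound t0 uP; rewrite Hr0 in cJ.
apply: ler_pM; try (apply: exprn_ge0 => //).
  apply: ler_weXn2l => //; rewrite leq_mul2l; apply/orP; right.
  by rewrite -[X in (_ <= X)%N](card_ord k) max_card.
apply: ler_weXn2l => //.
have H : (#|[pred j | r j == j]| <= k.-1./2)%N by move: cJ cnt0; lia.
exact: H.
Qed.
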